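(* Let $T$ be a finite tree and let $P=p_0p_1\dots p_k$ ($k\ge1$) be a path in $T$ such that each of $p_1,\dots,p_{k-1}$ has degree $2$ in $T$. Let $B$ be the vertex set of the component containing $p_k$ of the graph obtained from $T$ by deleting the edges of $P$, and assume $B$ is not trivial (i.e. $p_k$ has a neighbour not on $P$). If $k$ is odd, then for every $\ell\ge1$, \[\omega_{\ell}(p_0,T[B\cup P])-\omega_{\ell}(p_0,P)\leq \omega_{\ell-1}(p_k,T[B\cup P])-\omega_{\ell-1}(p_k,P).\]
   Context: $T[B\cup P]$ is the subgraph of $T$ induced by $B\cup\{p_0,\dots,p_k\}$. For a graph $G$, a vertex $x$ and $\ell\ge0$, $\omega_\ell(x,G)$ is the number of walks of length $\ell$ in $G$ starting at $x$. $P$ is regarded as a graph (the path). *)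

(* Defs.v *)
From mathcomp Require Import all_boot all_order all_algebra.
Set Implicit Arguments. Unset Strict Implicit. Unset Printing Implicit Defensive.

Section Graphs.
Variable T : finType.

Definition simple_graph (e : rel T) : Prop :=
  symmetric e /\ irreflexive e.

Definition connected_graph (e : rel T) : Prop :=
  forall x y : T, connect e x y.

Definition acyclic_graph (e : rel T) : Prop :=
  forall c : seq T, 3 <= size c -> uniq c -> ~~ cycle e c.

(* a finite tree (nonempty, since connected graphs here are required to have
   the path vertices; connectivity of the empty graph is vacuous) *)
Definition is_tree (e : rel T) : Prop :=
  [/\ simple_graph e, connected_graph e & acyclic_graph e].

Definition deg (e : rel T) (x : T) : nat := #|[set y | e x y]|.

(* number of walks of length l starting at x in the graph with adjacency r:
   sequences w_0 ... w_l with w_0 = x and r w_i w_{i+1} for all i < l *)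
Definition nwalks (r : rel T) (x : T) (l : nat) : nat :=
  #|[set w : {ffun 'I_l.+1 -> T} | (w ord0 == x) &&
       [forall i : 'I_l, r (w (widen_ord (leqnSn l) i)) (w (lift ord0 i))]]|.

Definition induced (e : rel T) (S : {set T}) : rel T :=
  fun x y => [&& e x y, x \in S & y \in S].

Definition path_edge (p : nat -> T) (k : nat) : rel T :=
  fun x y => [exists i : 'I_k,
     ((x == p i) && (y == p i.+1)) || ((y == p i) && (x == p i.+1))].

Definition path_set (p : nat -> T) (k : nat) : {set T} :=
  [set x | [exists i : 'I_k.+1, x == p i]].

Definition del_path_edges (e : rel T) (p : nat -> T) (k : nat) : rel T :=
  fun x y => e x y && ~~ path_edge p k x y.

Definition compB (e : rel T) (p : nat -> T) (k : nat) : {set T} :=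
  [set x | connect (del_path_edges e p k) (p k) x].

End Graphs.

(* Main.v *)
Require Import Defs.
From mathcomp Require Import all_boot all_order all_algebra.
From mathcomp Require Import zify.
Import Order.TTheory GRing.Theory Num.Theory.
Set Implicit Arguments. Unset Strict Implicit. Unset Printing Implicit Defensive.


Definition cons_w (T : finType) (l : nat) (x : T) (w : {ffun 'I_l.+1 -> T}) : {ffun 'I_l.+2 -> T} :=
  [ffun i => match @unlift l.+2 ord0 i with Some j => w j | None => x end].
Definition tail_w (T : finType) (l : nat) (w : {ffun 'I_l.+2 -> T}) : {ffun 'I_l.+1 -> T} :=
  [ffun j => w (lift ord0 j)].

Lemma nwalks0 (T : finType) (r : rel T) x : nwalks r x 0 = 1.
Proof.
rewrite /nwalks (_ : [set _ | _] = [set [ffun=> x]]) ?cards1 //.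
apply/setP => w; rewrite !inE; apply/andP/eqP => [[/eqP w0 _]|->].
  by apply/ffunP => i; rewrite ffunE (ord1 i).
by rewrite ffunE; split => //; apply/forallP => -[].
Qed.

Lemma walk_split (T : finType) (r : rel T) l (w : {ffun 'I_l.+2 -> T}) :
  [forall i : 'I_l.+1, r (w (widen_ord (leqnSn l.+1) i)) (w (lift ord0 i))] =
  r (w ord0) (w (lift ord0 ord0)) &&
  [forall j : 'I_l, r (tail_w w (widen_ord (leqnSn l) j)) (tail_w w (lift ord0 j))].
Proof.
apply/forallP/andP => [H|[H0 /forallP H]].
  split; first by have := H ord0; congr (r (w _) _); apply: val_inj.
  apply/forallP => j; have := H (lift ord0 j); rewrite !ffunE.
  by congr (r (w _) (w _)); apply: val_inj.
move=> i; case: (unliftP ord0 i) => [j ->|->].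
  have := H j; rewrite !ffunE; congr (r (w _) (w _)); apply: val_inj => //.
by have := H0; congr (r (w _) _); apply: val_inj.
Qed.

Lemma nwalksS (T : finType) (r : rel T) x l : nwalks r x l.+1 = \sum_(y | r x y) nwalks r y l.
Proof.
rewrite /nwalks -sum1_card.
rewrite (partition_big (fun w : {ffun 'I_l.+2 -> T} => w (lift ord0 ord0)) predT) //.
rewrite [RHS]big_mkcond /=; apply: eq_bigr => y _.
case: ifP => rxy; last first.
  rewrite big_pred0 // => w; rewrite !inE walk_split.
  apply/negP => /andP[/andP[/eqP w0 /andP[H _]] /eqP wy].
  by rewrite w0 wy rxy in H.
rewrite -sum1_card (reindex (@cons_w T l x)) /=.
  apply: eq_bigl => w; rewrite !inE walk_split.
rewrite !ffunE unlift_none liftK eqxx /=.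
  have -> : tail_w (cons_w x w) = w by apply/ffunP => j; rewrite !ffunE liftK.
  by case: eqP => [->|_]; rewrite ?rxy ?andbF ?andbT.
exists (@tail_w T l) => w.
  by rewrite inE => _; apply/ffunP => j; rewrite !ffunE liftK.
rewrite !inE => /andP[/andP[/eqP w0 _] _]; apply/ffunP => i; rewrite !ffunE.
by case: (unliftP ord0 i) => [j ->|->]; rewrite ?ffunE ?w0.
Qed.

Lemma pinj (T : finType) (k : nat) (p : nat -> T) :
  {in [pred i | i <= k] &, injective p} ->
  forall i j, i <= k -> j <= k -> (p i == p j) = (i == j).
Proof.
move=> hinj i j hi hj; apply/eqP/eqP => [|->//]; exact: hinj.
Qed.

Lemma pe_sym (T : finType) (k : nat) (p : nat -> T) x y :
  path_edge p k x y = path_edge p k y x.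
Proof. by apply: eq_existsb => i; rewrite orbC. Qed.

Lemma pe_p (T : finType) (k : nat) (p : nat -> T) :
  {in [pred i | i <= k] &, injective p} ->
  forall j y, j <= k ->
  path_edge p k (p j) y = ((0 < j) && (y == p j.-1)) || ((j < k) && (y == p j.+1)).
Proof.
move=> hinj j y hj; have pI := pinj hinj.
apply/existsP/idP => [[i /orP[/andP[a b]|/andP[b a]]]|].
- rewrite pI // ?(ltnW (ltn_ord i)) // in a; rewrite (eqP a) ltn_ord b orbT //.
- rewrite pI // in a; rewrite (eqP a) /= b //.
- case/orP => /andP[h1 h2].
    have hi : j.-1 < k by lia.
    exists (Ordinal hi); rewrite /= prednK // h2 eqxx orbT //.
  by exists (Ordinal h1); rewrite /= h2 eqxx.
Qed.

Lemma pe_S (T : finType) (k : nat) (p : nat -> T) x y :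
  path_edge p k x y -> x \in path_set p k.
Proof.
case/existsP => i /orP[/andP[/eqP -> _]|/andP[_ /eqP ->]]; rewrite inE; apply/existsP.
  by exists (widen_ord (leqnSn k) i).
by exists (lift ord0 i).
Qed.

Lemma pS (T : finType) (k : nat) (p : nat -> T) j : j <= k -> p j \in path_set p k.
Proof. by move=> hj; rewrite inE; apply/existsP; exists (Ordinal (hj : j < k.+1)). Qed.

Lemma e_inner (T : finType) (e : rel T) (k : nat) (p : nat -> T) :
  symmetric e ->
  {in [pred i | i <= k] &, injective p} ->
  (forall i, i < k -> e (p i) (p i.+1)) ->
  (forall i, 0 < i < k -> deg e (p i) = 2) ->
  forall j y, 0 < j < k -> e (p j) y = (y == p j.-1) || (y == p j.+1).
Proof.
move=> hsym hinj hedge hdeg j y /andP[j0 jk].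
have pI := pinj hinj.
have sub : [set p j.-1; p j.+1] \subset [set y | e (p j) y].
  apply/subsetP => z; rewrite !inE => /orP[] /eqP ->.
    by rewrite hsym -{2}(prednK j0); apply: hedge; lia.
  exact: hedge.
have ne : p j.-1 != p j.+1 by rewrite pI; lia.
have := hdeg j; rewrite /deg j0 jk => /(_ isT) hd.
have : [set p j.-1; p j.+1] == [set y | e (p j) y].
  by rewrite eqEcard sub hd cards2 ne.
move/eqP/setP/(_ y); rewrite !inE => <-; done.
Qed.

Lemma del_inner (T : finType) (e : rel T) (k : nat) (p : nat -> T) :
  symmetric e ->
  {in [pred i | i <= k] &, injective p} ->
  (forall i, i < k -> e (p i) (p i.+1)) ->
  (forall i, 0 < i < k -> deg e (p i) = 2) ->
  forall j x, 0 < j < k -> del_path_edges e p k x (p j) = false.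
Proof.
move=> hsym hinj hedge hdeg j x hj; rewrite /del_path_edges hsym pe_sym.
rewrite (e_inner hsym hinj hedge hdeg _ hj) (pe_p hinj x); last by lia.
case/andP: hj => -> ->; by case: (_ == _); case: (_ == _).
Qed.

Lemma path_pred (T : eqType) (r : rel T) x s z :
  path r x s -> z \in s -> exists w, r w z.
Proof.
elim: s x => // a s IH x /= /andP[rxa ps]; rewrite inE => /orP[/eqP ->|zs].
  by exists x.
exact: IH ps zs.
Qed.

Lemma path_iota (T : finType) (e : rel T) (k : nat) (p : nat -> T) :
  (forall i, i < k -> e (p i) (p i.+1)) ->
  forall n a, a + n <= k -> path e (p a) (map p (iota a.+1 n)).
Proof.
move=> hedge; elim=> // n IH a han /=; rewrite hedge ?IH //; lia.
Qed.

Lemma del_sym (T : finType) (e : rel T) (k : nat) (p : nat -> T) :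
  symmetric e -> symmetric (del_path_edges e p k).
Proof. by move=> hsym x y; rewrite /del_path_edges hsym pe_sym. Qed.

Lemma p0_notin_B (T : finType) (e : rel T) (k : nat) (p : nat -> T) :
  is_tree e -> 1 <= k ->
  {in [pred i | i <= k] &, injective p} ->
  (forall i, i < k -> e (p i) (p i.+1)) ->
  (forall i, 0 < i < k -> deg e (p i) = 2) ->
  p 0 \notin compB e p k.
Proof.
case=> [[hsym hirr] _ hacy] k1 hinj hedge hdeg; have pI := pinj hinj.
rewrite inE; apply/negP => /connectP[s0 ps0 hl0].
move: hl0; case: (shortenP ps0) => s ps us _ hl.
have sne : s != [::].
  by case: s {ps us} hl => //= /eqP; rewrite pI //; lia.
pose m := map p (iota 1 k.-1).
have hk : k = k.-1.+1 by lia.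
have H3 : 3 <= size (p k :: s ++ m).
  case: s {ps us} hl sne ps => // y [|z s] hl _ /=; last by rewrite size_cat size_map size_iota; lia.
  rewrite andbT => dy; move: hl dy => /= <-; rewrite /m size_map size_iota.
  case: (ltnP 1 k) => [|hk1]; first lia.
  have k1e : k = 1 by lia.
  rewrite /del_path_edges (pe_p hinj) // k1e /= eqxx /= andbF //.
have Hu : uniq (p k :: s ++ m).
  rewrite -cat_cons cat_uniq us /=.
  rewrite /m map_inj_in_uniq ?iota_uniq ?andbT; last first.
    move=> a b; rewrite !mem_iota => ha hb /eqP; rewrite pI; [move/eqP=> //|lia|lia].
  apply/hasPn => z /mapP[i hi ->]; rewrite mem_iota in hi.
  rewrite inE negb_or pI; try lia.
  apply/andP; split; first lia.
  by apply/negP => /(path_pred ps) [w]; rewrite (del_inner hsym hinj hedge hdeg) //; lia.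
have Hc : cycle e (p k :: s ++ m).
  have hi : iota 1 k = rcons (iota 1 k.-1) k.
    by rewrite {1}hk -(addn1 k.-1) iotaD cats1 add1n -hk.
  rewrite /= rcons_cat cat_path /m -map_rcons -hi -hl.
  rewrite (path_iota hedge) ?andbT //.
  by apply: sub_path ps => x y /andP[].
by move: (hacy _ H3 Hu); rewrite Hc.
Qed.

Local Notation HH e p k := (induced e (compB e p k :|: path_set p k)).

Lemma HH_sym (T : finType) (e : rel T) (k : nat) (p : nat -> T) :
  symmetric e -> symmetric (HH e p k).
Proof. by move=> hsym x y; rewrite /induced hsym [(x \in _) && _]andbC. Qed.

Lemma pkB (T : finType) (e : rel T) (k : nat) (p : nat -> T) : p k \in compB e p k.
Proof. by rewrite inE connect0. Qed.

Lemma H_inner (T : finType) (e : rel T) (k : nat) (p : nat -> T) :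
  symmetric e ->
  {in [pred i | i <= k] &, injective p} ->
  (forall i, i < k -> e (p i) (p i.+1)) ->
  (forall i, 0 < i < k -> deg e (p i) = 2) ->
  forall j y, 0 < j < k -> HH e p k (p j) y = (y == p j.-1) || (y == p j.+1).
Proof.
move=> hsym hinj hedge hdeg j y hj; rewrite /induced (e_inner hsym hinj hedge hdeg) //.
rewrite !in_setU (pS p (_ : j <= k)) ?orbT /=; last by lia.
case: eqP => [->|_]; first by rewrite (pS p) ?orbT //; lia.
case: eqP => [->|_] //; by rewrite (pS p) ?orbT //; lia.
Qed.

Lemma H_0 (T : finType) (e : rel T) (k : nat) (p : nat -> T) :
  is_tree e -> 1 <= k ->
  {in [pred i | i <= k] &, injective p} ->
  (forall i, i < k -> e (p i) (p i.+1)) ->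
  (forall i, 0 < i < k -> deg e (p i) = 2) ->
  forall y, HH e p k (p 0) y = (y == p 1).
Proof.
move=> htree k1 hinj hedge hdeg y.
have nB := p0_notin_B htree k1 hinj hedge hdeg.
case: htree => [[hsym hirr] _ _].
apply/idP/eqP => [|->]; last first.
  by rewrite /induced hedge // !in_setU !(pS p) ?orbT.
case/and3P=> e0y _ yin; case: (eqVneq y (p 1)) => [//|ny1]; exfalso.
have dy : del_path_edges e p k (p 0) y.
  by rewrite /del_path_edges e0y (pe_p hinj) //= k1 (negbTE ny1).
have yB : y \in compB e p k.
  move: yin; rewrite !inE => /orP[//|/existsP[i /eqP yi]].
  have hi := ltn_ord i; rewrite yi.
  case: (ltnP 0 i) => i0; last first.
    by move: e0y; rewrite yi (_ : nat_of_ord i = 0) ?hirr //; lia.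
  case: (ltnP i k) => ik.
    by move: dy; rewrite yi (del_inner hsym hinj hedge hdeg) //; rewrite i0 ik.
  by rewrite (_ : nat_of_ord i = k) ?connect0 //; lia.
move: nB; rewrite !inE; apply/negP; apply/negPn.
move: yB; rewrite inE => yB; apply: connect_trans yB _; apply: connect1; by rewrite del_sym.
Qed.

Lemma H_k1 (T : finType) (e : rel T) (k : nat) (p : nat -> T) :
  symmetric e -> 1 <= k ->
  (forall i, i < k -> e (p i) (p i.+1)) ->
  HH e p k (p k) (p k.-1).
Proof.
move=> hsym k1 hedge; have := hedge k.-1; rewrite prednK // => h; rewrite /induced hsym h; last lia.
by rewrite !in_setU !(pS p) ?orbT //; lia.
Qed.

Lemma H_b0 (T : finType) (e : rel T) (k : nat) (p : nat -> T) :
  1 <= k -> {in [pred i | i <= k] &, injective p} ->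
  1 < #|compB e p k| ->
  exists b0, HH e p k (p k) b0 && (b0 != p k.-1).
Proof.
move=> k1 hinj hB.
have : 0 < #|compB e p k :\ p k| by rewrite (cardsD1 (p k)) pkB in hB.
rewrite card_gt0 => /set0Pn[x]; rewrite !inE => /andP[xk /connectP[s ps xl]].
case: s ps xl => [_ /eqP|b0 s /= /andP[db ps] _]; first by rewrite (negbTE xk).
exists b0; move: db; rewrite /del_path_edges => /andP[eb npe].
have b0B : b0 \in compB e p k by rewrite inE; apply: connect1; rewrite /del_path_edges eb.
rewrite /induced eb !in_setU b0B pkB /=; apply/eqP => bk.
by move: npe; rewrite (pe_p hinj) // bk eqxx k1.
Qed.

Lemma sum_pred2 (T : finType) (F : T -> nat) a b : a != b ->
  \sum_(y | (y == a) || (y == b)) F y = F a + F b.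
Proof.
move=> nab; rewrite (bigD1 a) ?eqxx //= (bigD1 b) /=; last by rewrite eqxx orbT eq_sym.
rewrite big_pred0 ?addn0 // => y; case: eqP => [->|]; rewrite ?eqxx ?andbF //=.
by case: eqP => [->|]; rewrite ?eqxx ?andbF ?andbT.
Qed.

Theorem lemma2 (T : finType) (e : rel T) (k : nat) (p : nat -> T) :
  is_tree e ->
  1 <= k ->
  {in [pred i | i <= k] &, injective p} ->
  (forall i, i < k -> e (p i) (p i.+1)) ->
  (forall i, 0 < i < k -> deg e (p i) = 2) ->
  1 < #|compB e p k| ->
  odd k ->
  forall l : nat, 1 <= l ->
    ((nwalks (induced e (compB e p k :|: path_set p k)) (p 0%N) l)%:Z
       - (nwalks (path_edge p k) (p 0%N) l)%:Z
     <= (nwalks (induced e (compB e p k :|: path_set p k)) (p k) l.-1)%:Z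
       - (nwalks (path_edge p k) (p k) l.-1)%:Z)%R.
Proof.
move=> htree k1 hinj hedge hdeg hB hodd l l1.
have [[hsym hirr] _ _] := htree.
have pI := pinj hinj.
set H := induced _ _.
set Pe := path_edge p k.
have [b0 /andP[hb0 nb0]] := H_b0 k1 hinj hB.
have WH0 m : nwalks H (p 0) m.+1 = nwalks H (p 1) m.
  by rewrite nwalksS (eq_bigl _ _ (H_0 htree k1 hinj hedge hdeg)) big_pred1_eq.
have WP0 m : nwalks Pe (p 0) m.+1 = nwalks Pe (p 1) m.
  rewrite nwalksS (eq_bigl (fun y => y == p 1)) ?big_pred1_eq // => y.
  by rewrite /Pe (pe_p hinj) //= k1.
have WHj m j : 0 < j < k ->
    nwalks H (p j) m.+1 = nwalks H (p j.-1) m + nwalks H (p j.+1) m.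
  move=> hj; rewrite nwalksS (eq_bigl _ _ (fun y => H_inner hsym hinj hedge hdeg y hj)).
  by rewrite sum_pred2 // pI; lia.
have WPj m j : 0 < j < k ->
    nwalks Pe (p j) m.+1 = nwalks Pe (p j.-1) m + nwalks Pe (p j.+1) m.
  move=> hj; rewrite nwalksS (eq_bigl (fun y => (y == p j.-1) || (y == p j.+1))).
    by rewrite sum_pred2 // pI; lia.
  move=> y; rewrite /Pe (pe_p hinj); last lia.
  by case/andP: hj => -> ->.
pose E m := \sum_(y | H (p k) y && (y != p k.-1)) nwalks H y m.
have WHk m : nwalks H (p k) m.+1 = nwalks H (p k.-1) m + E m.
  by rewrite nwalksS (bigD1 (p k.-1) (H_k1 hsym k1 hedge)).
have WPk m : nwalks Pe (p k) m.+1 = nwalks Pe (p k.-1) m.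
  rewrite nwalksS (eq_bigl (fun y => y == p k.-1)) ?big_pred1_eq // => y.
  by rewrite /Pe (pe_p hinj) // ltnn k1 /= orbF.
have Eb m : nwalks H b0 m <= E m.
  by rewrite /E (bigD1 b0) /=; [exact: leq_addr | exact/andP].
have Wb m : nwalks H (p k) m <= nwalks H b0 m.+1.
  rewrite nwalksS (bigD1 (p k)) /=; first exact: leq_addr.
  by rewrite /H HH_sym.
pose D j m : int := ((nwalks H (p j) m)%:Z - (nwalks Pe (p j) m)%:Z)%R.
have D0 j : D j 0 = 0%R by rewrite /D !nwalks0 subrr.
have DW j m : (D j m <= (nwalks H (p j) m)%:Z)%R by rewrite /D; lia.
have R0 m : D 0 m.+1 = D 1 m by rewrite /D WH0 WP0.
have Rj m j : 0 < j < k -> D j m.+1 = (D j.-1 m + D j.+1 m)%R.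
  by move=> hj; rewrite /D WHj // WPj //; lia.
have Rk m : D k m.+1 = (D k.-1 m + (E m)%:Z)%R by rewrite /D WHk WPk; lia.
have Q : forall m j, (0 < j)%N -> (j.*2 <= k.+1)%N -> (D j m <= D (k.+1 - j)%N m)%R.
  elim/ltn_ind => -[|m] IH j j0 jk; first by rewrite !D0.
  have [jeq|jne] := eqVneq j.*2 k.+1.
    by rewrite (_ : k.+1 - j = j) //; lia.
  have jk2 : j.*2 < k.
    have : j.*2 != k by apply/eqP => h; move: hodd; rewrite -h odd_double.
    lia.
  case: (ltnP 1 j) => j1.
    rewrite Rj; last lia.
    rewrite Rj; last lia.
    rewrite [X in (_ <= X)%R]addrC; apply: lerD.
      rewrite (_ : (k.+1 - j).+1 = k.+1 - j.-1); last lia.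
      apply: IH => //; lia.
    rewrite (_ : (k.+1 - j).-1 = k.+1 - j.+1); last lia.
    apply: IH => //; lia.
  have -> : j = 1 by lia.
  rewrite (_ : k.+1 - 1 = k); last lia.
  rewrite Rj; last lia.
  rewrite Rk addrC.
  apply: lerD.
    rewrite (_ : k.-1 = k.+1 - 2); last lia.
    apply: IH => //; lia.
  case: m IH => [|m] IH; first by rewrite D0; lia.
  rewrite R0.
  apply: le_trans (IH m _ 1 _ _) _ => //.
  rewrite (_ : k.+1 - 1 = k); last lia.
  apply: le_trans (DW _ _) _.
  have := Wb m; have := Eb m.+1; lia.
case: l l1 => // l _ /=.
have h : (D 1 l <= D k l)%R.
  by move: (Q l 1 isT); rewrite (_ : (k.+1 - 1)%N = k); [apply; lia | lia].
by move: h; rewrite -R0.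
Qed.
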